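(* Let $N=n+m$ with $n,m\ge 2$, and let $f=x_0p_0+x_1p_1+\cdots+x_np_n+g\in K[x_0,\dots,x_n,u_1,\dots,u_m]_d$ define a Perazzo hypersurface $X=V(f)\subseteq\mathbb{P}^N$ of degree $d\ge 3$. If $X$ is a cone, then $X$ is projectively equivalent to a cone with vertex a point over a Perazzo hypersurface $Y\subseteq\mathbb{P}^{N-1}$ of degree $d$.
   Context: $K$ is an algebraically closed field of characteristic zero. A Perazzo hypersurface $X\subset\mathbb{P}^N$ ($N\ge 4$) of degree $d\ge 3$ is a hypersurface defined by a form $f\in K[x_0,\dots,x_n,u_1,\dots,u_m]$ of the form $f=x_0p_0+x_1p_1+\cdots+x_np_n+g$, where $n,m$ are integers with $n+m=N$, $n,m\ge 2$, the $p_i\in K[u_1,\dots,u_m]_{d-1}$ are algebraically dependent but linearly independent over $K$, and $g\in K[u_1,\dots,u_m]_d$. A hypersurface $V(f)$ is a cone if, after a linear change of the variables, $f$ does not involve one of the variables (equivalently, the partial derivatives of $f$ are linearly dependent). *)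

(* Defs.v *)
From HB Require Import structures.
From mathcomp Require Import all_boot all_order all_algebra.
From mathcomp Require Export mpoly.
Set Implicit Arguments. Unset Strict Implicit. Unset Printing Implicit Defensive.
Import Order.TTheory GRing.Theory.
Local Open Scope ring_scope.

Section Perazzo.
Variable K : fieldType.

(* p is a form (homogeneous polynomial) of degree d: every monomial of its
   support has total degree d (the zero polynomial is a form of every degree). *)
Definition is_form (k d : nat) (p : {mpoly K[k]}) : bool :=
  all (fun mo => mdeg mo == d) (msupp p).

Definition subst_mpoly (l k : nat) (q : 'I_l -> {mpoly K[k]}) (P : {mpoly K[l]})
  : {mpoly K[k]} := P \mPo [tuple q i | i < l].

Definition alg_dependent (l k : nat) (q : 'I_l -> {mpoly K[k]}) : Prop :=
  exists P : {mpoly K[l]}, P != 0 /\ subst_mpoly q P = 0.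

Definition lin_independent (l k : nat) (q : 'I_l -> {mpoly K[k]}) : Prop :=
  forall c : 'I_l -> K, \sum_(i < l) c i *: q i = 0 -> forall i, c i = 0.

(* Variables of K[x_0..x_n, u_1..u_m] = {mpoly K[n.+1 + m]}:
   x_i = 'X_(lshift m i)  (i : 'I_n.+1),  u_(j+1) = 'X_(rshift n.+1 j) (j : 'I_m). *)
Definition xvar (n m : nat) (i : 'I_n.+1) : {mpoly K[n.+1 + m]} := 'X_(lshift m i).
Definition uvar (n m : nat) (j : 'I_m) : {mpoly K[n.+1 + m]} := 'X_(rshift n.+1 j).

Definition u_embed (n m : nat) (q : {mpoly K[m]}) : {mpoly K[n.+1 + m]} :=
  subst_mpoly (@uvar n m) q.

Definition perazzo (n m d : nat) (f : {mpoly K[n.+1 + m]}) : Prop :=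
  [/\ (2 <= n)%N, (2 <= m)%N, (3 <= d)%N &
  exists (p : 'I_n.+1 -> {mpoly K[m]}) (g : {mpoly K[m]}),
    [/\ forall i, is_form d.-1 (p i),
        is_form d g,
        alg_dependent p,
        lin_independent p &
        f = \sum_(i < n.+1) xvar m i * u_embed n (p i) + u_embed n g]].

Definition lin_change (k : nat) (A : 'M[K]_k) (f : {mpoly K[k]}) : {mpoly K[k]} :=
  subst_mpoly (fun i => \sum_(j < k) A i j *: 'X_j) f.

Definition free_of_var (k : nat) (i : 'I_k) (f : {mpoly K[k]}) : bool :=
  all (fun mo : 'X_{1..k} => mo i == 0%N) (msupp f).

Definition is_cone (k : nat) (f : {mpoly K[k]}) : Prop :=
  exists (A : 'M[K]_k) (i : 'I_k), A \in unitmx /\ free_of_var i (lin_change A f).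

End Perazzo.
Arguments perazzo {K} n m d f.

(* Main.v *)
Require Import Defs.
From HB Require Import structures.
From mathcomp Require Import all_boot all_order all_algebra.
From mathcomp Require Import mpoly.
From mathcomp Require Import fingroup perm.
Set Implicit Arguments. Unset Strict Implicit. Unset Printing Implicit Defensive.
Import GRing.Theory.
Local Open Scope ring_scope.

Section Gen.
Variable K : fieldType.

Notation S := (@subst_mpoly K _ _).

Lemma S_X l k (q : 'I_l -> {mpoly K[k]}) i : S q 'X_i = q i.
Proof. by rewrite /subst_mpoly comp_mpolyXU -tnth_nth tnth_mktuple. Qed.

Lemma S_D l k (q : 'I_l -> {mpoly K[k]}) a b : S q (a + b) = S q a + S q b.
Proof. exact: comp_mpolyD. Qed.
Lemma S_B l k (q : 'I_l -> {mpoly K[k]}) a b : S q (a - b) = S q a - S q b.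
Proof. exact: comp_mpolyB. Qed.
Lemma S_M l k (q : 'I_l -> {mpoly K[k]}) a b : S q (a * b) = S q a * S q b.
Proof. by rewrite /subst_mpoly rmorphM. Qed.
Lemma S_Z l k (q : 'I_l -> {mpoly K[k]}) c a : S q (c *: a) = c *: S q a.
Proof. exact: comp_mpolyZ. Qed.
Lemma S_0 l k (q : 'I_l -> {mpoly K[k]}) : S q 0 = 0.
Proof. exact: comp_mpoly0. Qed.
Lemma S_sum l k (q : 'I_l -> {mpoly K[k]}) I (r : seq I) (P : pred I) F :
  S q (\sum_(i <- r | P i) F i) = \sum_(i <- r | P i) S q (F i).
Proof. by rewrite /subst_mpoly raddf_sum. Qed.
Lemma S_XM l k (q : 'I_l -> {mpoly K[k]}) mo :
  S q 'X_[mo] = \prod_(i < l) (q i) ^+ (mo i).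
Proof. by rewrite /subst_mpoly comp_mpolyX; apply: eq_bigr => i _; rewrite tnth_mktuple. Qed.

Lemma S_ext l k (q q' : 'I_l -> {mpoly K[k]}) P : q =1 q' -> S q P = S q' P.
Proof. by move=> e; rewrite /subst_mpoly; congr comp_mpoly; apply: eq_mktuple. Qed.

Lemma S_id l (P : {mpoly K[l]}) : S (fun i => 'X_i) P = P.
Proof. exact: comp_mpoly_id. Qed.

Lemma S_A l k j (q : 'I_l -> {mpoly K[k]}) (r : 'I_k -> {mpoly K[j]}) P :
  S r (S q P) = S (fun i => S r (q i)) P.
Proof.
have eP := mpolyE P; set s := msupp P in eP; rewrite eP.
rewrite (S_sum q) (S_sum r) (S_sum (fun i => S r (q i))); apply: eq_bigr => mo _.
rewrite (S_Z q) (S_Z r) (S_Z (fun i => S r (q i))); congr (_ *: _).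
rewrite !S_XM /subst_mpoly rmorph_prod.
by apply: eq_bigr => i _; rewrite rmorphXn.
Qed.

Lemma S_free l k i (q q' : 'I_l -> {mpoly K[k]}) P :
  free_of_var i P -> (forall j, j != i -> q j = q' j) -> S q P = S q' P.
Proof.
move=> /allP fr e; have eP := mpolyE P; set s := msupp P in eP fr; rewrite eP.
rewrite (S_sum q) (S_sum q').
apply: eq_big_seq => mo /fr /eqP mi; rewrite (S_Z q) (S_Z q') !S_XM; congr (_ *: _).
apply: eq_bigr => j _; case: (eqVneq j i) => [->|/e ->//]; by rewrite mi !expr0.
Qed.

Definition linsub k l (M : 'M[K]_(k, l)) (i : 'I_k) : {mpoly K[l]} :=
  \sum_(j < l) M i j *: 'X_j.

Lemma S_lin k l j (M : 'M[K]_(k, l)) (y : 'I_l -> {mpoly K[j]}) i :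
  S y (linsub M i) = \sum_(r < l) M i r *: y r.
Proof. by rewrite /linsub S_sum; apply: eq_bigr => r _; rewrite S_Z S_X. Qed.

Lemma form_homog d k (p : {mpoly K[k]}) : is_form d p = (p \is @ishomog1 _ _ d mdeg).
Proof. by []. Qed.

End Gen.

Section G2.
Variable K : fieldType.
Notation S := (@subst_mpoly K _ _).

Lemma form_S l k e (q : 'I_l -> {mpoly K[k]}) P :
  is_form e P -> (forall i, is_form 1 (q i)) -> is_form e (S q P).
Proof.
move=> fP fq; rewrite form_homog /subst_mpoly comp_mpolyE.
rewrite big_seq; apply: rpred_sum => mo mP; apply: rpredZ.
have hs : forall s : seq 'I_l, \prod_(i <- s) (tnth [tuple q i0 | i0 < l] i) ^+ mo i
   \is @ishomog1 _ _ (\sum_(i <- s) mo i)%N mdeg.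
  elim=> [|i s IH]; first by rewrite !big_nil dhomog1.
  rewrite !big_cons; apply: dhomogM => //; rewrite tnth_mktuple.
  have := dhomogMn (mo i) (fq i); by rewrite mul1n.
have := hs (index_enum _); rewrite -mdegE.
by move: fP => /allP /(_ _ mP) /eqP ->.
Qed.
End G2.

Section G3.
Variable K : fieldType.
Notation S := (@subst_mpoly K _ _).

Definition glue T n m (x : 'I_n -> T) (y : 'I_m -> T) (j : 'I_(n + m)) : T :=
  match split j with inl i => x i | inr k => y k end.

Lemma glue_l T n m (x : 'I_n -> T) (y : 'I_m -> T) i : glue x y (lshift m i) = x i.
Proof. by rewrite /glue (unsplitK (@inl _ 'I_m i)). Qed.
Lemma glue_r T n m (x : 'I_n -> T) (y : 'I_m -> T) i : glue x y (rshift n i) = y i.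
Proof. by rewrite /glue (unsplitK (@inr 'I_n _ i)). Qed.

Lemma CL n m k (p : 'I_n.+1 -> {mpoly K[m]}) g (s : 'I_(n.+1+m) -> {mpoly K[k]}) :
 S s (\sum_(i < n.+1) xvar K m i * u_embed n (p i) + u_embed n g) =
 \sum_i s (lshift m i) * S (fun j => s (rshift n.+1 j)) (p i)
   + S (fun j => s (rshift n.+1 j)) g.
Proof.
rewrite S_D S_sum; congr (_ + _).
  apply: eq_bigr => i _; rewrite S_M /xvar S_X /u_embed S_A; congr (_ * _).
  by apply: S_ext => j; rewrite /uvar S_X.
by rewrite /u_embed S_A; apply: S_ext => j; rewrite /uvar S_X.
Qed.
End G3.

Section G4.
Variable K : fieldType.
Notation S := (@subst_mpoly K _ _).

Lemma S_linchange N (A : 'M[K]_N) f k (y : 'I_N -> {mpoly K[k]}) :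
  S y (lin_change A f) = S (fun r => \sum_j A r j *: y j) f.
Proof. by rewrite /lin_change S_A; apply: S_ext => r; exact: (S_lin A y r). Qed.

Lemma sum_id_mx N k (s : 'I_N -> {mpoly K[k]}) r :
  \sum_l (1%:M : 'M[K]_N) r l *: s l = s r.
Proof.
rewrite (bigD1 r) //= mxE eqxx scale1r big1 ?addr0 // => l ne.
by rewrite mxE eq_sym (negbTE ne) scale0r.
Qed.

Lemma TI N (f : {mpoly K[N]}) (A : 'M[K]_N) i0 :
  A \in unitmx -> free_of_var i0 (lin_change A f) ->
  forall k (s : 'I_N -> {mpoly K[k]}) t,
    S (fun j => s j + A j i0 *: t) f = S s f.
Proof.
move=> uA fr k s t.
pose w r := \sum_j (invmx A) r j *: s j.
pose w' r := w r + (r == i0)%:R *: t.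
have Hw r : \sum_j A r j *: w j = s r.
  transitivity (\sum_l (A *m invmx A) r l *: s l); last by rewrite mulmxV // sum_id_mx.
  under eq_bigr do rewrite /w scaler_sumr.
  rewrite exchange_big /=; apply: eq_bigr => l _; rewrite mxE scaler_suml.
  by apply: eq_bigr => j _; rewrite scalerA.
have Hw' r : \sum_j A r j *: w' j = s r + A r i0 *: t.
  under eq_bigr do rewrite scalerDr.
  rewrite big_split /= Hw; congr (_ + _).
  rewrite (bigD1 i0) //= eqxx scale1r big1 ?addr0 // => j ne.
  by rewrite (negbTE ne) scale0r scaler0.
transitivity (S w' (lin_change A f)).
  by rewrite S_linchange; apply: S_ext => r; rewrite Hw'.
rewrite (S_free fr (q' := w)); last first.
  by move=> j ne; rewrite /w' (negbTE ne) scale0r addr0.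
by rewrite S_linchange; apply: S_ext => r; rewrite Hw.
Qed.
End G4.

Section G5.
Variable K : fieldType.
Notation S := (@subst_mpoly K _ _).
Variables (n m : nat) (p : 'I_n.+1 -> {mpoly K[m]}) (g : {mpoly K[m]}).
Variables (A : 'M[K]_(n.+1 + m)) (i0 : 'I_(n.+1 + m)).
Hypothesis uA : A \in unitmx.
Hypothesis fr : free_of_var i0
  (lin_change A (\sum_(i < n.+1) xvar K m i * u_embed n (p i) + u_embed n g)).
Let a i := A (lshift m i) i0.
Let b k := A (rshift n.+1 k) i0.

Lemma addeq_l (V : zmodType) (x y z : V) : x = y -> x + z = y + z.
Proof. by move=> ->. Qed.

Lemma TIf k (x : 'I_n.+1 -> {mpoly K[k]}) (y : 'I_m -> {mpoly K[k]}) t :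
  \sum_i (x i + a i *: t) * S (fun j => y j + b j *: t) (p i)
     + S (fun j => y j + b j *: t) g
  = \sum_i x i * S y (p i) + S y g.
Proof.
move: (TI uA fr (glue x y) t); rewrite !CL => H.
have e1 : forall P, S (fun j => glue x y (rshift n.+1 j) + A (rshift n.+1 j) i0 *: t) P
   = S (fun j => y j + b j *: t) P by move=> P; apply: S_ext => j; rewrite glue_r.
have e2 : forall P, S (fun j => glue x y (rshift n.+1 j)) P = S y P
   by move=> P; apply: S_ext => j; rewrite glue_r.
etransitivity; [|etransitivity; [exact: H|]].
  rewrite e1; apply: addeq_l; apply: eq_bigr => i _; by rewrite e1 glue_l.
rewrite e2; apply: addeq_l; apply: eq_bigr => i _; by rewrite e2 glue_l.
Qed.

Lemma TIf0 k (y : 'I_m -> {mpoly K[k]}) t :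
  \sum_i (a i *: t) * S (fun j => y j + b j *: t) (p i)
     + S (fun j => y j + b j *: t) g = S y g.
Proof.
have H := TIf (fun _ => 0) y t.
have E : \sum_i (0 * S y (p i)) = 0 :> {mpoly K[k]} by rewrite big1 // => i _; rewrite mul0r.
rewrite E add0r in H; rewrite -[RHS]H.
apply: addeq_l; apply: eq_bigr => i _; by rewrite add0r.
Qed.

Lemma PI k (y : 'I_m -> {mpoly K[k]}) t i :
  S (fun j => y j + b j *: t) (p i) = S y (p i).
Proof.
have := TIf (fun i' => (i' == i)%:R) y t.
under eq_bigr do rewrite mulrDl.
rewrite big_split -addrA TIf0 => /addIr.
rewrite (bigD1 i) //= eqxx !mul1r big1 ?addr0; last first.
  by move=> j /negbTE ->; rewrite mul0r.
rewrite (bigD1 i) //= eqxx !mul1r big1 ?addr0 //.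
by move=> j /negbTE ->; rewrite mul0r.
Qed.

Lemma GI k (y : 'I_m -> {mpoly K[k]}) t :
  S (fun j => y j + b j *: t) g = S y g - \sum_i (a i *: t) * S y (p i).
Proof.
have H := TIf0 y t.
have E : \sum_i (a i *: t) * S (fun j => y j + b j *: t) (p i) = \sum_i (a i *: t) * S y (p i).
  by apply: eq_bigr => i _; rewrite PI.
rewrite E in H; rewrite -H; by rewrite [_ + S _ g]addrC addrK.
Qed.
End G5.

Section G6.
Variable K : fieldType.
Notation S := (@subst_mpoly K _ _).

Lemma exists_B m' (b : 'I_m'.+1 -> K) l0 : b l0 != 0 ->
  exists B : 'M[K]_m'.+1, B \in unitmx /\ forall k, B k ord_max = b k.
Proof.
move=> bl0; pose s := tperm l0 ord_max.
pose M1 : 'M[K]_m'.+1 := \matrix_(i, j) if j == ord_max then b (s i) else (i == j)%:R.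
exists (row_perm s M1); split; last by move=> k; rewrite !mxE eqxx tpermK.
rewrite row_permE unitmx_mul unitmx_perm /= unitmxE -det_tr det_trig; last first.
  apply/is_trig_mxP => i j lt; rewrite !mxE.
  have -> : (i == ord_max) = false.
    apply/negbTE; apply: contraTneq lt => ->; rewrite -leqNgt; exact: leq_ord.
  by rewrite -val_eqE /= (gtn_eqF lt).
rewrite (bigD1 ord_max) //= big1 ?mulr1; last first.
  by move=> i /negbTE ne; rewrite !mxE ne eqxx.
by rewrite !mxE eqxx /s tpermR unitfE.
Qed.

Lemma mat_comp N k (M : 'M[K]_N) (s : 'I_N -> {mpoly K[k]}) r : M \in unitmx ->
  \sum_j M r j *: (\sum_l (invmx M) j l *: s l) = s r.
Proof.
move=> uM.
transitivity (\sum_l (M *m invmx M) r l *: s l); last by rewrite mulmxV // sum_id_mx.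
under eq_bigr do rewrite scaler_sumr.
rewrite exchange_big /=; apply: eq_bigr => l _; rewrite mxE scaler_suml.
by apply: eq_bigr => j _; rewrite scalerA.
Qed.

Lemma form_lin l (c : 'I_l -> K) : is_form 1 (\sum_(j < l) c j *: ('X_j : {mpoly K[l]})).
Proof.
rewrite form_homog; apply: rpred_sum => j _; apply: rpredZ.
have h := (@dhomogX l K mdeg 1%N U_(j)); have e1 : (mdeg U_(j) == 1%N) by rewrite mdeg1. rewrite e1 in h; exact h.
Qed.

Lemma mnm1_eq (x y : 'X_{1..1}) : mdeg x = mdeg y -> x = y.
Proof. by rewrite !mdegE !big_ord1 => e; apply/mnmP => i; rewrite (ord1 i). Qed.

Lemma onevar e (P Q : {mpoly K[1]}) mo : is_form e P -> is_form e Q -> mo \in msupp P ->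
  Q@_mo *: P - P@_mo *: Q = 0.
Proof.
move=> /allP fP /allP fQ mP; apply/mpolyP => mo'.
rewrite mcoeffB !mcoeffZ mcoeff0.
have dmo : mdeg mo = e by apply/eqP; exact: fP.
case: (eqVneq mo' mo) => [->|ne]; first by rewrite mulrC subrr.
have z : forall R : {mpoly K[1]}, is_form e R -> R@_mo' = 0.
  move=> R /allP fR; apply/eqP; rewrite -[_ == 0]negbK -mcoeff_msupp; apply/negP => h.
  move: ne; rewrite (mnm1_eq (x := mo') (y := mo)) ?eqxx //.
  by rewrite dmo; apply/eqP; exact: fR.
by rewrite !z ?mulr0 ?subrr //; apply/allP.
Qed.

Lemma no_1var e n (q : 'I_n.+1 -> {mpoly K[1]}) : (2 <= n)%N ->
  (forall i, is_form e (q i)) -> lin_independent q -> False.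
Proof.
move=> hn fq li.
pose i0 : 'I_n.+1 := ord0. pose i1 : 'I_n.+1 := inord 1.
have ne10 : i1 != i0 by rewrite -val_eqE /= inordK // ltnS (ltnW hn).
have nz : q i0 != 0.
  apply/negP => /eqP z.
  have := li (fun i => (i == i0)%:R) _ i0; rewrite eqxx.
  move=> h; have : (1 : K) = 0 by apply: h; rewrite (bigD1 i0) //= ?eqxx scale1r z add0r big1 // => i /negbTE ->; rewrite scale0r.
  by move/eqP; rewrite oner_eq0.
have mP := mlead_supp nz; set mo := mlead (q i0) in mP.
pose c i := if i == i0 then (q i1)@_mo else if i == i1 then - (q i0)@_mo else 0.
have := li c _ i1; rewrite /c (negbTE ne10) eqxx => h.
suff : (q i0)@_mo == 0 by move: mP; rewrite mcoeff_msupp => /negP H /H.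
rewrite -oppr_eq0 h //.
rewrite (bigD1 i0) //= (bigD1 i1) //= big1; last first.
  by move=> i /andP [/negbTE -> /negbTE ->]; rewrite scale0r.
rewrite ?eqxx (negbTE ne10) ?eqxx addr0 scaleNr.
exact: onevar (fq i0) (fq i1) mP.
Qed.
End G6.

Unset Implicit Arguments.
Set Strict Implicit.

Lemma no_small (K : fieldType) e n m' (q : 'I_n.+1 -> {mpoly K[m']}) : (2 <= n)%N -> m' = 1%N ->
  (forall i, is_form e (q i)) -> lin_independent q -> False.
Proof. move=> hn em; subst m'; exact: no_1var. Qed.

Theorem mainTheorem1 (K : closedFieldType) (hchar : [pchar K] =i pred0)
    (n m d : nat) (f : {mpoly K[n.+1 + m]}) :
  perazzo n m d f -> is_cone f ->
  exists (n' m' : nat) (e : (n'.+1 + m').+1 = (n.+1 + m)%N)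
         (h : {mpoly K[n'.+1 + m']}) (A : 'M[K]_(n.+1 + m)) (c : K),
    [/\ perazzo n' m' d h, A \in unitmx, c != 0 &
        lin_change A f =
          c *: subst_mpoly (fun j => 'X_(cast_ord e (widen_ord (leqnSn _) j))) h].
Proof.
case: m f => [|m'] f [hn hm hd [p [g [fp fg ad li fE]]]] [A [i0 [uA fr]]]; first by [].
subst f.
pose a i := A (lshift m'.+1 i) i0; pose b k := A (rshift n.+1 k) i0.
have [l0 hl0] : exists l0, b l0 != 0.
  case: (pickP (fun k => b k != 0)) => [l0 h|hb]; first by exists l0.
  exfalso.
  have b0 k : b k = 0 by apply/eqP/negbFE/hb.
  have eX P : subst_mpoly (fun j => 'X_j + b j *: 1) P = P.
    by rewrite (S_ext (q' := fun j => 'X_j)) ?S_id // => j; rewrite b0 scale0r addr0.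
  have H := TIf uA fr (fun _ => 0) (fun j => 'X_j) 1.
  have sa : \sum_i a i *: p i = 0.
    move: H; rewrite eX S_id.
    have -> : \sum_i (0 + a i *: 1) * subst_mpoly (fun j => 'X_j + b j *: 1) (p i)
       = \sum_i a i *: p i.
      by apply: eq_bigr => i _; rewrite eX add0r -scalerAl mul1r.
    have -> : \sum_i 0 * subst_mpoly (fun j => 'X_j) (p i) = 0 :> {mpoly K[m'.+1]}.
      by rewrite big1 // => i _; rewrite mul0r.
    by rewrite add0r => /(canRL (addrK _)); rewrite subrr.
  have a0 := li a sa.
  have v0 j : A j i0 = 0.
    by rewrite -(splitK j); case: (split j) => /= k; [exact: a0 | exact: b0].
  move: uA; rewrite unitmxE (expand_det_col _ i0) big1 ?unitr0 // => j _.
  by rewrite v0 mul0r.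
have [B [uB Bl]] := exists_B hl0.
pose r (k : 'I_m'.+1) : {mpoly K[m']} := \sum_(j < m') B k (widen_ord (leqnSn m') j) *: 'X_j.
pose q i := subst_mpoly r (p i). pose g0 := subst_mpoly r g.
pose h := \sum_(i < n.+1) xvar K m' i * u_embed n (q i) + u_embed n g0.
have e : (n.+1 + m').+1 = (n.+1 + m'.+1)%N by rewrite addnS.
pose Ar : 'M[K]_(n.+1, m'.+1) := \matrix_(i, k) if k == ord_max then a i else 0.
pose A' : 'M[K]_(n.+1 + m'.+1) := block_mx 1%:M Ar 0 B.
have li_q : lin_independent q.
  move=> c sc.
  pose P := \sum_i c i *: p i.
  have SrP : subst_mpoly r P = 0.
    rewrite /P S_sum -[RHS]sc; apply: eq_bigr => i _; by rewrite S_Z.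
  pose y' (k : 'I_m'.+1) : {mpoly K[m'.+1]} :=
    \sum_(j < m') B k (widen_ord (leqnSn m') j) *: 'X_(widen_ord (leqnSn m') j).
  have Y k : \sum_(j < m'.+1) B k j *: 'X_j = y' k + b k *: 'X_ord_max.
    by rewrite big_ord_recr /= Bl.
  have P1 : subst_mpoly (fun k => y' k + b k *: 'X_ord_max) P = subst_mpoly y' P.
    rewrite /P !S_sum; apply: eq_bigr => i _; by rewrite !S_Z (PI uA fr).
  have P2 : subst_mpoly y' P = 0.
    transitivity (subst_mpoly (fun j : 'I_m' => ('X_(widen_ord (leqnSn m') j) : {mpoly K[m'.+1]})) (subst_mpoly r P)); last by rewrite SrP S_0.
    rewrite S_A; apply: S_ext => k; rewrite /r S_sum; apply: eq_bigr => j _; by rewrite S_Z S_X.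
  have P3 : P = subst_mpoly (fun k => \sum_l invmx B k l *: 'X_l)
                 (subst_mpoly (fun k => \sum_j B k j *: 'X_j) P).
    rewrite S_A -[LHS]S_id; apply: S_ext => k.
    rewrite S_sum; under eq_bigr do rewrite S_Z S_X.
    by rewrite mat_comp.
  have P0 : P = 0.
    rewrite {1}P3 (S_ext P (q' := fun k => y' k + b k *: 'X_ord_max)); last exact: Y.
    by rewrite P1 P2 S_0.
  exact: li c P0.
have form_q i : is_form d.-1 (q i) by apply: form_S => // k; apply: form_lin.
have form_g0 : is_form d g0 by apply: form_S => // k; apply: form_lin.
have hm' : (2 <= m')%N.
  case: (leqP 2 m') => // lt; exfalso.
  have em : m' = 1%N by apply/eqP; rewrite eqn_leq -ltnS lt.
  exact: no_small hn em form_q li_q.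
exists n, m', e, h, A', 1; split => //.
- split => //; exists q, g0; split => //.
  case: ad => P [nzP SP]; exists P; split => //.
  by rewrite /q -S_A SP S_0.
- by rewrite unitmxE det_ublock det1 mul1r -unitmxE.
- exact: oner_neq0.
rewrite scale1r.
pose N := rshift n.+1 (ord_max : 'I_m'.+1).
pose y (k : 'I_m'.+1) : {mpoly K[n.+1 + m'.+1]} :=
  \sum_(j < m') B k (widen_ord (leqnSn m') j) *: 'X_(rshift n.+1 (widen_ord (leqnSn m') j)).
have Ll i : \sum_(j < n.+1 + m'.+1) A' (lshift m'.+1 i) j *: 'X_j
     = 'X_(lshift m'.+1 i) + a i *: 'X_N.
  rewrite big_split_ord; apply: f_equal2.
    under eq_bigr do rewrite block_mxEul.
    exact: (sum_id_mx (fun j => 'X_(lshift m'.+1 j))).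
  under eq_bigr do rewrite block_mxEur.
  rewrite (bigD1 ord_max) //= big1 ?addr0; first by rewrite mxE eqxx.
  by move=> k /negbTE ne; rewrite mxE ne scale0r.
have Lr k : \sum_(j < n.+1 + m'.+1) A' (rshift n.+1 k) j *: 'X_j = y k + b k *: 'X_N.
  rewrite big_split_ord /= big1 ?add0r; last by move=> j _; rewrite block_mxEdl mxE scale0r.
  under eq_bigr do rewrite block_mxEdr.
  by rewrite big_ord_recr Bl.
have ER P : subst_mpoly (fun k => \sum_(j < n.+1 + m'.+1) A' (rshift n.+1 k) j *: 'X_j) P
    = subst_mpoly (fun k => y k + b k *: 'X_N) P by apply: S_ext => k; exact: Lr.
have EL i : 'X_(cast_ord e (widen_ord (leqnSn (n.+1 + m')) (lshift m' i)))
    = 'X_(lshift m'.+1 i) :> {mpoly K[n.+1 + m'.+1]}.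
  by have -> : cast_ord e (widen_ord (leqnSn (n.+1 + m')) (lshift m' i)) = lshift m'.+1 i by apply: val_inj.
have EMB P : subst_mpoly (fun k => 'X_(cast_ord e (widen_ord (leqnSn (n.+1 + m')) (rshift n.+1 k))))
    (subst_mpoly r P) = subst_mpoly y P.
  rewrite S_A; apply: S_ext => k; rewrite /r S_sum; apply: eq_bigr => j _.
  rewrite S_Z S_X.
  by have -> : cast_ord e (widen_ord (leqnSn (n.+1 + m')) (rshift n.+1 j)) = rshift n.+1 (widen_ord (leqnSn m') j) by apply: val_inj.
rewrite /lin_change CL [in RHS]/h CL.
transitivity (\sum_i ('X_(lshift m'.+1 i) + a i *: 'X_N) * subst_mpoly y (p i)
   + (subst_mpoly y g - \sum_i (a i *: 'X_N) * subst_mpoly y (p i))).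
  rewrite ER (GI uA fr); apply: addeq_l; apply: eq_bigr => i _.
  by rewrite ER (PI uA fr) Ll.
under eq_bigr do rewrite mulrDl.
rewrite big_split addrACA subrr addr0 EMB; apply: addeq_l.
by apply: eq_bigr => i _; rewrite EL EMB.
Qed.
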